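(* Let $n \ge 1$ and let $k,\ell \ge 0$ be integers with $k+\ell \le n$. The number of rooted trees on the vertex set $[n+1]=\{1,\ldots,n+1\}$ in which the root has exactly $k$ children that are smaller than the root and exactly $\ell$ children that are larger than the root equals $$\binom{n+1}{k+\ell+1}\,(k+\ell)\,n^{\,n-k-\ell-1}.$$
   Context: A rooted tree on a vertex set $V$ is a tree with vertex set $V$ together with a distinguished vertex (the root); the children of the root are the vertices adjacent to it. Vertices are compared by their integer labels. *)

(* Defs.v *)
From HB Require Import structures.
From mathcomp Require Import all_boot all_order all_algebra.
Set Implicit Arguments. Unset Strict Implicit. Unset Printing Implicit Defensive.
Import Order.TTheory GRing.Theory Num.Theory.

(* Vertices are 'I_N, labels 0..N-1, an order-preserving relabelling of [N]. *)
Definition adj (N : nat) (E : {set {set 'I_N}}) : rel 'I_N :=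
  fun x y => [set x; y] \in E.

Definition is_tree (N : nat) (E : {set {set 'I_N}}) : bool :=
  [forall e in E, #|e| == 2] &&
  (#|E| == N.-1) &&
  [forall x, forall y, connect (adj E) x y].

(* children of root r in the tree E = neighbours of r *)
Definition small_children (N : nat) (E : {set {set 'I_N}}) (r : 'I_N) : {set 'I_N} :=
  [set c | adj E r c & c < r].
Definition large_children (N : nat) (E : {set {set 'I_N}}) (r : 'I_N) : {set 'I_N} :=
  [set c | adj E r c & r < c].

Definition num_rooted_trees (N k l : nat) : nat :=
  #|[set p : {set {set 'I_N}} * 'I_N |
      is_tree p.1 && (#|small_children p.1 p.2| == k)
                  && (#|large_children p.1 p.2| == l)]|.

(* Main.v *)
Require Import Defs.
From mathcomp Require Import all_boot all_order all_algebra.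
From mathcomp Require Import ring zify.
Import Order.TTheory GRing.Theory Num.Theory.
Set Implicit Arguments. Unset Strict Implicit. Unset Printing Implicit Defensive.

Section Count.
Variable T : finType.
Implicit Types (R J X : {set T}) (f h : {ffun T -> T}).

Definition closedb (f : T -> T) X := [forall x in X, f x \in X].
Definition acyc R (f : T -> T) :=
  [forall X : {set T}, (X \subset ~: R) && closedb f X ==> (X == set0)].
Definition Cset R R' : {set {ffun T -> T}} :=
  [set f : {ffun T -> T} | [forall x in R, f x == x] && [forall x in ~: R, f x \in ~: R :|: R'] && acyc R f].
Definition Jset R (f : T -> T) := [set x in ~: R | f x \in R].
Definition Psi J f : {ffun T -> T} := [ffun x => if x \in J then x else f x].

Lemma acycP R (f : T -> T) :
  reflect (forall X, X \subset ~: R -> (forall x, x \in X -> f x \in X) -> X = set0)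
          (acyc R f).
Proof.
apply: (iffP forallP) => H X.
  move=> sX cX; apply/eqP; move/implyP: (H X); apply; rewrite sX /=.
  by apply/forallP => x; apply/implyP; apply: cX.
apply/implyP => /andP [sX /forallP cX]; apply/eqP; apply: H => // x xX.
by move/implyP: (cX x); apply.
Qed.

Lemma CsetP R R' f :
  reflect [/\ forall x, x \in R -> f x = x,
              forall x, x \notin R -> f x \in ~: R :|: R' & acyc R f]
          (f \in Cset R R').
Proof.
rewrite inE; apply: (iffP andP) => [[/andP [/forallP H1 /forallP H2] H3]|[H1 H2 H3]].
  split=> // x xR; first by apply/eqP; move/implyP: (H1 x); apply.
  by move/implyP: (H2 x); apply; rewrite inE.
split=> //; apply/andP; split; apply/forallP => x; apply/implyP => xR.
  by rewrite H1.
by apply: H2; rewrite inE in xR.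
Qed.

Lemma fiber_map R R' J f : R' \subset R -> J \subset ~: R ->
  f \in Cset R R' -> Jset R f = J -> Psi J f \in Cset (R :|: J) J.
Proof.
move=> sR' sJ /CsetP [H1 H2 H3] HJ; apply/CsetP; split.
- move=> x; rewrite inE ffunE => /orP [xR|->] //.
  have xJ : x \notin J by apply/negP => /(subsetP sJ); rewrite inE xR.
  by rewrite (negbTE xJ) H1.
- move=> x; rewrite inE negb_or ffunE => /andP [xR xJ]; rewrite (negbTE xJ).
  have fxR : f x \notin R.
    by apply/negP => fR; move/negP: xJ; apply; rewrite -HJ inE inE xR fR.
  by rewrite !inE negb_or fxR /=; case: (f x \in J).
- apply/acycP => X sX cX; move/acycP: H3; apply.
    apply/subsetP => x /(subsetP sX); rewrite !inE negb_or => /andP [] //.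
  move=> x xX; have := cX x xX; rewrite ffunE.
  have : x \notin J by move/(subsetP sX): xX; rewrite !inE negb_or => /andP [].
  by move/negbTE ->.
Qed.

Definition famF R' J h : T -> pred T :=
  fun x => [pred y | if x \in J then y \in R' else y == h x].

Lemma fiber_char R R' J h f : R' \subset R -> J \subset ~: R ->
  h \in Cset (R :|: J) J ->
  [&& f \in Cset R R', Jset R f == J & Psi J f == h] = (f \in family (famF R' J h)).
Proof.
move=> sR' sJ /CsetP [G1 G2 G3].
have JnR x : x \in J -> x \notin R by move/(subsetP sJ); rewrite inE.
apply/idP/idP.
  case/and3P => /CsetP [H1 H2 H3] /eqP HJ /eqP <-.
  apply/familyP => x; rewrite /famF inE ffunE; case xJ: (x \in J) => //.
  have : x \in Jset R f by rewrite HJ.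
  rewrite !inE => /andP [_ fxR]; have := H2 x (JnR x xJ).
  by rewrite !inE fxR /=.
move/familyP => Hf.
have fR x : x \in R -> f x = x.
  move=> xR; have xJ : x \notin J by apply/negP => /JnR; rewrite xR.
  by have := Hf x; rewrite inE (negbTE xJ) => /eqP ->; rewrite G1 // inE xR.
have fnJ x : x \notin J -> f x = h x.
  by move=> xJ; have := Hf x; rewrite inE (negbTE xJ) => /eqP.
have fJ x : x \in J -> f x \in R' by move=> xJ; have := Hf x; rewrite inE xJ.
have hout x : x \notin R -> x \notin J -> h x \notin R.
  move=> xR xJ; have := G2 x; rewrite !inE !negb_or xR xJ => /(_ isT).
  by case/orP => [/andP []|/JnR].
apply/and3P; split.
- apply/CsetP; split => // [x xR|].
    case xJ: (x \in J); first by rewrite inE fJ ?orbT.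
    by rewrite !inE fnJ ?xJ // hout ?xJ.
  apply/acycP => X sX cX; move/acycP: G3; apply.
    apply/subsetP => x xX; have xR := subsetP sX x xX; rewrite inE in xR.
    rewrite !inE negb_or xR /=; apply/negP => xJ.
    by have := subsetP sX _ (cX x xX); rewrite inE (subsetP sR') ?fJ.
  move=> x xX; have xR := subsetP sX x xX; rewrite inE in xR.
  case xJ: (x \in J).
    by have := subsetP sX _ (cX x xX); rewrite inE (subsetP sR') ?fJ.
  by rewrite -fnJ ?xJ // cX.
- apply/eqP/setP => x; rewrite !inE; case xJ: (x \in J).
    by rewrite (JnR x xJ) (subsetP sR') ?fJ.
  by case xR: (x \in R) => //=; rewrite fnJ ?xJ // (negbTE (hout x _ _)) ?xR ?xJ.
- apply/eqP/ffunP => x; rewrite ffunE; case: ifP => xJ.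
    by rewrite G1 // inE xJ orbT.
  by rewrite fnJ ?xJ.
Qed.

Lemma foldr_prod (g : T -> nat) :
  foldr muln 1 [seq g x | x : T] = \prod_(x : T) g x.
Proof.
rewrite /image_mem; transitivity (\prod_(x <- enum T) g x); last by rewrite big_enum.
elim: (enum T) => [|a s IH]; first by rewrite big_nil.
by rewrite big_cons /= IH.
Qed.

Lemma fiber_card R R' J : R' \subset R -> J \subset ~: R ->
  #|[set f in Cset R R' | Jset R f == J]| = #|R'| ^ #|J| * #|Cset (R :|: J) J|.
Proof.
move=> sR' sJ.
rewrite -sum1_card (partition_big (Psi J) (mem (Cset (R :|: J) J))); last first.
  by move=> f /setIdP [fC /eqP fJ]; exact: (fiber_map sR' sJ fC fJ).
rewrite mulnC -sum_nat_const; apply: eq_bigr => h hC.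
rewrite sum1dep_card -(@eq_card _ (family (famF R' J h))); last first.
  by move=> f; rewrite -(fiber_char f sR' sJ hC) in_set in_set -andbA.
rewrite card_family foldr_prod.
rewrite (eq_bigr (fun x => if x \in J then #|R'| else 1)); last first.
  move=> x _; rewrite /famF; case: ifP => xJ.
    by apply: eq_card => y; rewrite !inE.
  by rewrite -(card1 (h x)); apply: eq_card => y; rewrite !inE.
by rewrite -big_mkcond /= prod_nat_const.
Qed.

Definition Ccount (s d : nat) := if s == 0 then 1 else d * (s + d) ^ (s - 1).

Lemma Cset_full R R' : ~: R = set0 -> #|Cset R R'| = 1.
Proof.
move=> hR; have RT : R = setT by rewrite -[R]setCK hR setC0.
suff -> : Cset R R' = [set [ffun x => x]] by rewrite cards1.
apply/setP => f; apply/CsetP/set1P => [[H1 _ _]|->].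
  by apply/ffunP => x; rewrite ffunE H1 // RT inE.
split=> [x _|x|]; first by rewrite ffunE.
  by rewrite RT inE.
by apply/acycP => X sX _; apply/eqP; rewrite -subset0 -hR.
Qed.

Lemma Cset_empty R : ~: R != set0 -> #|Cset R set0| = 0.
Proof.
move=> hR; apply/eqP; rewrite cards_eq0; apply/eqP/setP => f; rewrite in_set0.
apply/negP => /CsetP [H1 H2 /acycP H3]; move/eqP: hR; apply; apply: H3 => // x xR.
by have := H2 x; rewrite inE in xR => /(_ xR); rewrite setU0.
Qed.

Lemma Cset_partition R R' : #|Cset R R'| =
  \sum_(J : {set T} | J \subset ~: R) #|[set f in Cset R R' | Jset R f == J]|.
Proof.
rewrite -sum1_card [LHS](partition_big (fun f : {ffun T -> T} => Jset R f) (fun J : {set T} => J \subset ~: R)); last first.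
  by move=> f _; apply/subsetP => x; rewrite inE => /andP [].
apply: eq_bigr => J _; rewrite sum1dep_card; apply: eq_card => f.
by rewrite !inE.
Qed.

Lemma sum_subsets_card (A : {set T}) (w : nat -> nat) :
  \sum_(J : {set T} | J \subset A) w #|J| = \sum_(j < #|A|.+1) 'C(#|A|, j) * w j.
Proof.
rewrite (partition_big (fun J : {set T} => inord #|J| : 'I_#|A|.+1) xpredT) //.
apply: eq_bigr => j _.
transitivity (\sum_(J : {set T} | (J \subset A) && (inord #|J| == j)) 1 * w j).
  apply: eq_bigr => J /andP [sJ /eqP <-].
  by rewrite mul1n inordK // ltnS subset_leq_card.
rewrite -big_distrl sum1dep_card /= -cards_draws; congr (_ * _).
apply: eq_card => J; rewrite !inE; case sJ: (J \subset A) => //=.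
by rewrite -val_eqE /= inordK // ltnS subset_leq_card.
Qed.
End Count.

Lemma arith s d : 0 < s ->
  \sum_(j < s.+1) 'C(s, j) * (if (j : nat) == 0 then 0 else d ^ j * Ccount (s - j) j)
  = d * (s + d) ^ (s - 1).
Proof.
case: s => // s _; rewrite big_ord_recl /= muln0 add0n subn1 /= expnDn big_distrr.
apply: eq_bigr => i _; have bi : bump 0 i = i.+1 by rewrite /bump leq0n add1n.
rewrite /= bi subSS /Ccount.
have := ltn_ord i; rewrite ltnS leq_eqVlt => /orP [/eqP ei|lti].
  by rewrite ei subnn /= !binn expnS; ring.
have -> : (s - i == 0) = false by apply/negbTE; rewrite subn_eq0 -ltnNge.
have -> : s - i + i.+1 = s.+1 by lia.
have -> : s - i = (s - i - 1).+1 by lia.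
rewrite subSS subn0 expnS.
have hb := mul_bin_diag s.+1 i; rewrite /= in hb.
set e := (s.+1 ^ (s - i - 1)).
transitivity (d * (i.+1 * 'C(s.+1, i.+1)) * (d ^ i * e)); first by ring.
by rewrite -hb [s.+1 ^ (_.+1)]expnS -/e; ring.
Qed.

Lemma C_count (T : finType) s : forall (R R' : {set T}),
  #|~: R| = s -> R' \subset R -> #|Cset R R'| = Ccount s #|R'|.
Proof.
elim/ltn_ind: s => s IH R R' hs sR'.
case: (posnP s) => [s0|spos].
  rewrite s0 /Ccount /=; apply: Cset_full; apply/eqP; rewrite -cards_eq0 hs s0.
  by [].
rewrite Cset_partition.
rewrite (eq_bigr (fun J : {set T} =>
   (fun j => if j == 0 then 0 else #|R'| ^ j * Ccount (s - j) j) #|J|)); last first.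
  move=> J sJ; rewrite fiber_card //=.
  case: (eqVneq J set0) => [->|J0].
    by rewrite cards0 /= setU0 Cset_empty ?muln0 // -card_gt0 hs.
  have cJ : 0 < #|J| by rewrite card_gt0.
  rewrite (gtn_eqF cJ); congr (_ * _); apply: IH; last by apply: subsetUr.
    have := cardsID J (~: R); rewrite (setIidPr sJ) setDE -setCU.
    have : #|J| <= s by rewrite -hs subset_leq_card.
    lia.
  have := cardsID J (~: R); rewrite (setIidPr sJ) setDE -setCU.
  have : #|J| <= s by rewrite -hs subset_leq_card.
  lia.
have -> : Ccount s #|R'| = #|R'| * (s + #|R'|) ^ (s - 1).
  by rewrite /Ccount; case: s spos {IH hs}.
by rewrite (sum_subsets_card (~: R) (fun j => if j == 0 then 0 else #|R'| ^ j * Ccount (s - j) j)) hs arith.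
Qed.


Section Trees.
Variable N : nat.
Implicit Types (f g : {ffun 'I_N -> 'I_N}) (r x y : 'I_N) (E : {set {set 'I_N}}).

Definition Phi r f : {set {set 'I_N}} := [set [set x; f x] | x in ~: [set r]].
Definition Pr r := Cset [set r] [set r].

Lemma Pr_root r f : f \in Pr r -> f r = r.
Proof. by case/CsetP => H1 _ _; apply: H1; rewrite inE. Qed.

Lemma no2cycle r f x : f \in Pr r -> x != r -> f (f x) != x.
Proof.
move=> fP xr; have fr := Pr_root fP; case/CsetP: fP => _ _ /acycP H.
apply/eqP => ffx.
have fxr : f x != r by apply/eqP => e; move: ffx; rewrite e fr => e'; move: xr; rewrite e' eqxx.
have : [set x; f x] = set0.
  apply: H.
    by apply/subsetP => y; rewrite !inE => /orP [] /eqP ->.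
  by move=> y; rewrite !inE => /orP [] /eqP ->; rewrite ?ffx eqxx ?orbT.
by move/setP/(_ x); rewrite !inE eqxx.
Qed.

Lemma doubleton_eq (a b c d : 'I_N) : [set a; b] = [set c; d] ->
  (a = c /\ b = d) \/ (a = d /\ b = c).
Proof.
move=> E.
have ha : a \in [set c; d] by rewrite -E set21.
have hb : b \in [set c; d] by rewrite -E set22.
have hc : c \in [set a; b] by rewrite E set21.
have hd : d \in [set a; b] by rewrite E set22.
move: ha hb hc hd; rewrite !inE.
move=> /orP[/eqP ac|/eqP ad] /orP[/eqP bc|/eqP bd] /orP[/eqP ca|/eqP cb] /orP[/eqP da|/eqP db];
 first [left; split; congruence | right; split; congruence].
Qed.

Lemma Phi_inj_fun r f : f \in Pr r -> {in ~: [set r] &, injective (fun x => [set x; f x])}.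
Proof.
move=> fP x y xr yr /doubleton_eq [[] //|[e1 e2]].
rewrite !inE in xr; have := no2cycle fP xr; by rewrite e2 -e1 eqxx.
Qed.

Lemma adj_sym E : symmetric (adj E).
Proof. by move=> x y; rewrite /adj setUC. Qed.

Lemma card_Phi r f : f \in Pr r -> #|Phi r f| = N.-1.
Proof. by move=> fP; rewrite card_in_imset ?cardsC1 ?card_ord //; apply: Phi_inj_fun. Qed.

Lemma Phi_tree r f : f \in Pr r -> is_tree (Phi r f).
Proof.
move=> fP; rewrite /is_tree card_Phi // eqxx andbT; apply/andP; split.
  apply/forallP => e; apply/implyP => /imsetP [x xr ->].
  rewrite cards2; rewrite !inE in xr.
  by case: (eqVneq x (f x)) => // e1; have := no2cycle fP xr; rewrite -e1 -e1 eqxx.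
have toR x : connect (adj (Phi r f)) x r.
  case/CsetP: fP => _ _ /acycP H.
  have : [set x | ~~ connect (adj (Phi r f)) x r] = set0.
    apply: H.
      by apply/subsetP => y; rewrite !inE; apply: contra => /eqP ->; rewrite connect0.
    move=> y; rewrite !inE => ny; apply/negP => cy; move/negP: (ny); apply.
    apply: connect_trans cy; apply: connect1.
    rewrite /adj; apply/imsetP; exists y => //.
    by rewrite !inE; apply/eqP => yr; move: ny; rewrite yr connect0.
  by move/setP/(_ x); rewrite !inE => /negbFE.
apply/forallP => x; apply/forallP => y.
apply: connect_trans (toR x) _; rewrite (sym_connect_sym (@adj_sym _)); exact: toR.
Qed.

Lemma Phi_adj r f c : f \in Pr r -> adj (Phi r f) r c = (c != r) && (f c == r).
Proof.
move=> fP; rewrite /adj; apply/imsetP/andP => [[x xr /doubleton_eq [[e1 _]|[e1 e2]]]|[cr /eqP fc]].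
- by move: xr; rewrite !inE e1 eqxx.
- by rewrite e2 -e1 eqxx; split => //; move: xr; rewrite !inE.
- by exists c; rewrite ?inE ?cr // fc setUC.
Qed.

Lemma Phi_inj r : {in Pr r &, injective (Phi r)}.
Proof.
move=> f g fP gP ePhi; have fr := Pr_root fP; have gr := Pr_root gP.
have : [set x | f x != g x] = set0.
  case/CsetP: (gP) => _ _ /acycP; apply.
    by apply/subsetP => x; rewrite !inE; apply: contra => /eqP ->; rewrite fr gr.
  move=> x; rewrite !inE => dx.
  have xr : x != r by apply: contra dx => /eqP ->; rewrite fr gr.
  have : [set x; g x] \in Phi r g by apply/imsetP; exists x; rewrite // !inE.
  rewrite -ePhi => /imsetP [z zr /doubleton_eq [[e1 e2]|[e1 e2]]].
    by move: dx; rewrite e2 e1 eqxx.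
  rewrite e2 -e1 eq_sym -e2; exact: no2cycle gP xr.
move=> D; apply/ffunP => x; apply/eqP.
by move/setP/(_ x): D; rewrite !inE => /negbFE.
Qed.

Fixpoint reachn (e : rel 'I_N) r n x :=
  if n is m.+1 then (x == r) || [exists y, e x y && reachn e r m y] else x == r.

Lemma reachn_path e r x p : path e x p -> last x p = r -> reachn e r (size p) x.
Proof.
elim: p x => [|y p IH] x /=; first by move=> _ ->.
case/andP => exy py ly; apply/orP; right; apply/existsP; exists y.
by rewrite exy IH.
Qed.

Lemma Phi_surj r E : is_tree E -> exists2 f, f \in Pr r & Phi r f = E.
Proof.
case/andP => /andP [_ /eqP cE] /forallP conn.
have hex x : exists n, reachn (adj E) r n x.
  have := (forallP (conn x)) r; case/connectP => p pth lst.
  by exists (size p); apply: reachn_path pth (esym lst).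
pose dist x := ex_minn (hex x).
have dist_reach x : reachn (adj E) r (dist x) x by rewrite /dist; case: ex_minnP.
have dist_min x n : reachn (adj E) r n x -> dist x <= n.
  by rewrite /dist; case: ex_minnP => m _ H; apply: H.
have step x : x != r -> exists y, adj E x y && (dist y < dist x).
  move=> xr; have := dist_reach x; case ed: (dist x) => [|m] /=.
    by rewrite (negbTE xr).
  rewrite (negbTE xr) /= => /existsP [y /andP [axy ry]]; exists y.
  by rewrite axy /= ltnS; apply: dist_min.
pose f := [ffun x => if x == r then r else odflt r [pick y | adj E x y && (dist y < dist x)]].
have fstep x : x != r -> adj E x (f x) && (dist (f x) < dist x).
  move=> xr; rewrite /f ffunE (negbTE xr); case: pickP => [y //|none].
  by case: (step x xr) => y hy; rewrite none in hy.
have fP : f \in Pr r.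
  apply/CsetP; split.
  - by move=> x; rewrite inE => /eqP ->; rewrite /f ffunE eqxx.
  - by move=> x _; rewrite !inE orNb.
  - apply/acycP => X sX cX.
    suff H : forall n x, dist x = n -> x \notin X.
      by apply/setP => x; rewrite inE (negbTE (H _ x erefl)).
    elim/ltn_ind => n IH x dx; apply/negP => xX.
    have xr : x != r by have := subsetP sX x xX; rewrite !inE.
    have /andP [_ lt] := fstep x xr; rewrite dx in lt.
    by move/negP: (IH _ lt (f x) erefl); apply; apply: cX.
exists f => //; apply/eqP; rewrite eqEcard card_Phi // cE leqnn andbT.
apply/subsetP => e /imsetP [x xr ->].
have xr1 : x != r by move: xr; rewrite !inE.
by have /andP [a _] := fstep x xr1.
Qed.
End Trees.


Definition condE N k l (E : {set {set 'I_N}}) (r : 'I_N) :=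
  is_tree E && (#|small_children E r| == k) && (#|large_children E r| == l).

Lemma num_sum N k l : num_rooted_trees N k l =
  \sum_(r : 'I_N) #|[set E | condE k l E r]|.
Proof.
rewrite /num_rooted_trees -sum1_card big_mkcond /=.
symmetry.
rewrite (eq_bigr (fun r => \sum_(E : {set {set 'I_N}}) if condE k l E r then 1 else 0)); last first.
  by move=> r _; rewrite -sum1dep_card big_mkcond.
rewrite exchange_big pair_big /=; apply: eq_bigr => [[E r]] _.
by rewrite inE.
Qed.

Lemma card_ltset N m : m <= N -> #|[set c : 'I_N | c < m]| = m.
Proof.
move=> hm; have inj : injective (widen_ord hm) by move=> i j /(congr1 val) /= /val_inj.
rewrite -{2}(card_ord m) -(card_imset _ inj).
apply: eq_card => c; rewrite inE; apply/idP/imsetP => [cm|[i _ ->]].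
  by exists (Ordinal cm) => //; apply: val_inj.
by rewrite /= ltn_ord.
Qed.

Lemma card_gtset N (r : 'I_N) : #|[set c : 'I_N | r < c]| = N - r.+1.
Proof.
have -> : [set c : 'I_N | r < c] = ~: [set c : 'I_N | c < r.+1].
  by apply/setP => c; rewrite !inE ltnNge ltnS.
have := cardsC [set c : 'I_N | c < r.+1]; rewrite card_ltset ?card_ord //.
lia.
Qed.

Lemma card_Sset N (r : 'I_N) k l :
  #|[set S : {set 'I_N} | (S \subset ~: [set r]) &&
     (#|S :&: [set c : 'I_N | c < r]| == k) && (#|S :&: [set c : 'I_N | r < c]| == l)]|
  = 'C(r, k) * 'C(N - r.+1, l).
Proof.
set lt := [set c : 'I_N | c < r]; set gt := [set c : 'I_N | r < c].
have dLG : gt :&: lt = set0.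
  apply/setP => c; rewrite !inE; apply/negP => /andP [a b].
  by have := ltn_trans a b; rewrite ltnn.
have key (A B : {set 'I_N}) : A \subset lt -> B \subset gt -> (A :|: B) :&: lt = A /\ (A :|: B) :&: gt = B.
  move=> sA sB.
  have BL : B :&: lt = set0 by apply/eqP; rewrite -subset0 -dLG setSI.
  have AG : A :&: gt = set0 by apply/eqP; rewrite -subset0 -dLG (setIC gt) setSI.
  by rewrite !setIUl (setIidPl sA) BL setU0 AG (setIidPl sB) set0U.
have ltr : lt \subset ~: [set r].
  by apply/subsetP => c; rewrite !inE => h; apply/eqP => e; move: h; rewrite e ltnn.
have gtr : gt \subset ~: [set r].
  by apply/subsetP => c; rewrite !inE => h; apply/eqP => e; move: h; rewrite e ltnn.
transitivity #|[set p.1 :|: p.2 | p in setX [set A : {set 'I_N} | A \subset lt & #|A| == k]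
                                         [set B : {set 'I_N} | B \subset gt & #|B| == l]]|.
  apply: eq_card => S; rewrite inE; apply/idP/imsetP.
    case/andP => /andP [sS /eqP cl] /eqP cg; exists (S :&: lt, S :&: gt).
      by rewrite !inE subsetIr cl eqxx subsetIr cg eqxx.
    rewrite /= -setIUr; apply/esym/setIidPl; apply/subsetP => c cS.
    have := subsetP sS c cS; rewrite !inE => /eqP cr.
    by case: (ltngtP c r) => // ecr; case: cr; apply: val_inj.
  move=> [[A B]]; rewrite !inE /= => /andP [/andP [sA /eqP cA] /andP [sB /eqP cB]] ->.
  have [k1 k2] := key _ _ sA sB.
  rewrite k1 k2 cA cB !eqxx !andbT subUset.
  by rewrite (subset_trans sA ltr) (subset_trans sB gtr).
rewrite card_in_imset; last first.
  move=> [A1 B1] [A2 B2]; rewrite !inE /= => /andP [/andP [sA1 _] /andP [sB1 _]].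
  move=> /andP [/andP [sA2 _] /andP [sB2 _]] e.
  have [k1 k2] := key _ _ sA1 sB1; have [k3 k4] := key _ _ sA2 sB2.
  by congr pair; [rewrite -k1 e k3 | rewrite -k2 e k4].
by rewrite cardsX !cards_draws card_ltset ?card_gtset // ltnW.
Qed.

Lemma count_r n (r : 'I_n.+1) k l :
  #|[set E | condE k l E r]| = 'C(r, k) * 'C(n - r, l) * Ccount (n - (k + l)) (k + l).
Proof.
have -> : [set E | condE k l E r] = Phi r @: [set f in Pr r | condE k l (Phi r f) r].
  apply/setP => E; rewrite inE; apply/idP/imsetP.
    move=> hE; have := hE; rewrite /condE => /andP [/andP [tE _] _].
    by case: (Phi_surj r tE) => f fP eE; exists f => //; rewrite inE fP /= eE.
  by case=> f; rewrite inE => /andP [fP hc] ->.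
rewrite card_in_imset; last first.
  by move=> f g /setIdP [fP _] /setIdP [gP _]; apply: Phi_inj.
have small f : f \in Pr r ->
    small_children (Phi r f) r = Jset [set r] f :&: [set c : 'I_n.+1 | c < r].
  by move=> fP; apply/setP => c; rewrite !inE Phi_adj.
have large f : f \in Pr r ->
    large_children (Phi r f) r = Jset [set r] f :&: [set c : 'I_n.+1 | r < c].
  by move=> fP; apply/setP => c; rewrite !inE Phi_adj.
pose Q := fun S : {set 'I_n.+1} => (S \subset ~: [set r]) &&
   (#|S :&: [set c : 'I_n.+1 | c < r]| == k) && (#|S :&: [set c : 'I_n.+1 | r < c]| == l).
transitivity #|[set f in Pr r | Q (Jset [set r] f)]|.
  apply: eq_card => f; apply/setIdP/setIdP => [] [fP H]; split => //; move: H.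
    rewrite /condE Phi_tree // small // large // /Q.
    have -> // : Jset [set r] f \subset ~: [set r].
    by apply/subsetP => x; rewrite inE => /andP [].
  rewrite /condE Phi_tree // small // large // /Q.
  by case/andP => /andP [_ -> ->].
rewrite -sum1_card (partition_big (fun f : {ffun 'I_n.+1 -> 'I_n.+1} => Jset [set r] f) Q); last first.
  by move=> f /setIdP [].
rewrite (eq_bigr (fun _ => Ccount (n - (k + l)) (k + l))); last first.
  move=> S QS.
  have /andP [/andP [sS /eqP cl] /eqP cg] := QS.
  have cS : #|S| = k + l.
    rewrite -(cardsID [set c : 'I_n.+1 | c < r] S) cl -cg; congr (_ + _).
    apply: eq_card => c; rewrite !inE; case cS: (c \in S); rewrite ?andbF ?andbT //=.
    have := subsetP sS c cS; rewrite !inE => /eqP cr.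
    by case: (ltngtP c r) => // ecr; case: cr; apply: val_inj.
  transitivity (\sum_(f in [set f in Cset [set r] [set r] | Jset [set r] f == S]) 1).
    apply: eq_bigl => f; apply/andP/setIdP => [[/setIdP [fP _] H]|[fP H]]; split => //.
    by apply/setIdP; split => //; rewrite (eqP H).
  rewrite sum1_card.
  rewrite fiber_card ?subxx // cards1 exp1n mul1n.
  have -> : Ccount (n - (k + l)) (k + l) = Ccount (n - (k + l)) #|S| by rewrite cS.
  apply: C_count; last by apply: subsetUr.
  have := cardsC ([set r] :|: S); rewrite cardsU1 card_ord cS.
  have -> : r \notin S by apply/negP => /(subsetP sS); rewrite !inE eqxx.
  lia.
rewrite sum_nat_cond_const card_Sset subSS.
by [].
Qed.

Lemma vander n k l : \sum_(r < n.+1) 'C(r, k) * 'C(n - r, l) = 'C(n.+1, (k + l).+1).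
Proof.
elim: n l => [|n IH] l.
  rewrite big_ord1 /= subnn bin0n.
  case: k => [|k]; case: l => [|l]; [by [] | ..]; by rewrite ?bin0n ?muln0 ?mul0n (@bin_small 1) // ?addnS ?addSn.
rewrite big_ord_recr /= subnn.
case: l => [|l].
  rewrite bin0 muln1 (eq_bigr (fun i : 'I_n.+1 => 'C(i, k) * 'C(n - i, 0))); last first.
    by move=> i _; rewrite !bin0.
  by rewrite IH !addn0 [in RHS]binS.
rewrite bin0n muln0 addn0.
rewrite (eq_bigr (fun i : 'I_n.+1 => 'C(i, k) * 'C(n - i, l.+1) + 'C(i, k) * 'C(n - i, l))); last first.
  by move=> i _; rewrite subSn ?binS ?mulnDr // -ltnS.
by rewrite big_split /= !IH [in RHS]binS addnS.
Qed.

Unset Implicit Arguments.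
Local Open Scope ring_scope.

Theorem mainTheorem1 (n k l : nat) :
  (1 <= n)%N -> (k + l <= n)%N ->
  (num_rooted_trees n.+1 k l)%:R =
    ('C(n.+1, (k + l).+1))%:R * (k + l)%:R
      * (n%:R : rat) ^ ((n%:Z - (k + l)%:Z - 1)%R).
Proof.
move=> n1 kln.
have -> : num_rooted_trees n.+1 k l = ('C(n.+1, (k + l).+1) * Ccount (n - (k + l)) (k + l))%N.
  rewrite num_sum (eq_bigr _ (fun r _ => count_r r k l)) -big_distrl /=.
  by rewrite vander.
rewrite natrM -mulrA; congr (_ * _).
rewrite /Ccount; case: eqP => [e|ne].
  have kl : (k + l = n)%N by lia.
  rewrite kl subrr sub0r exprN1 mulfV //.
  by rewrite pnatr_eq0 -lt0n.
have -> : (n - (k + l) + (k + l) = n)%N by lia.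
have -> : (n%:Z - (k + l)%:Z - 1)%R = (n - (k + l) - 1)%N :> int by lia.
by rewrite natrM natrX -exprnP.
Qed.
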